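(* Let $G$ be a planar graph which is not homeomorphic to $S^{1}$ and which admits a checkerboard coloring on $S^{2}$ with respect to a cellular embedding $p:G\to S^{2}$. Define $\omega_p:\Gamma(G)\to\mathbb{Z}$ by $\omega_p(\gamma)=1$ if $\gamma\in\Gamma_p^b(G)$, $\omega_p(\gamma)=-1$ if $\gamma\in\Gamma_p^w(G)$, and $\omega_p(\gamma)=0$ if $\gamma\in\Gamma(G)\setminus\Gamma_p(G)$. Then $\omega_p$ is weakly balanced on every edge $e$ of $G$, i.e. $\sum_{\gamma\in\Gamma_e(G)}\omega_p(\gamma)=0$ in $\mathbb{Z}$.
   Context: Graphs are finite, without isolated vertices and without vertices of degree one. A cycle is a subgraph homeomorphic to $S^1$; $\Gamma(G)$ is the set of all cycles of $G$, and $\Gamma_e(G)$ those containing the edge $e$. An embedding $p:G\to S^2$ is cellular if the closure of each connected component of $S^2-p(G)$ is a disk; then $\Gamma_p(G)\subset\Gamma(G)$ denotes the set of cycles that are the boundaries of the components of $S^2-p(G)$. $G$ admits a checkerboard coloring with respect to a cellular embedding $p$ if the components of $S^2-p(G)$ can be colored black and white so that any two components adjacent along an edge have different colors; $\Gamma_p^b(G)$ (resp. $\Gamma_p^w(G)$) is the set of boundaries of black (resp. white) components. *)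

(* Defs.v *)
(* Combinatorial (rotation-system) model of cellular
   embeddings of finite graphs in S^2. *)
From mathcomp Require Import all_boot all_order all_algebra all_fingroup.
Set Implicit Arguments. Unset Strict Implicit. Unset Printing Implicit Defensive.
Import GRing.Theory.
Local Open Scope ring_scope.

Section GraphDefs.
(* A finite multigraph (loops and multiple edges allowed): vertex type V,
   edge type E; each edge e has two darts (half-edges) (e,true), (e,false);
   head d is the vertex at which the dart d ends. *)
Variables (V E : finType) (head : E * bool -> V).

Definition dart := (E * bool)%type.
Definition dart_of : finType := (E * bool)%type.
Definition rev (d : dart) : dart := (d.1, ~~ d.2).

Definition inc (C : {set E}) (v : V) : bool :=
  [exists d : dart, (d.1 \in C) && (head d == v)].
Definition degC (C : {set E}) (v : V) : nat :=
  #|[set d : dart | (d.1 \in C) && (head d == v)]|.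
Definition adjC (C : {set E}) : rel V := fun u w =>
  [exists d : dart, [&& d.1 \in C, head (rev d) == u & head d == w]].

(* a cycle = a subgraph homeomorphic to S^1 = nonempty, connected, 2-regular *)
Definition is_cycle (C : {set E}) : bool :=
  [&& C != set0,
      [forall v, inc C v ==> (degC C v == 2)%N] &
      [forall u, forall w, (inc C u && inc C w) ==> connect (adjC C) u w]].

Definition Cycles : {set {set E}} := [set C : {set E} | is_cycle C].

Definition min_deg2 : Prop := forall v : V, (1 < degC setT v)%N.

Definition connected_graph : Prop := forall u w : V, connect (adjC setT) u w.

Definition rotation_system (sigma : {perm dart_of}) : Prop :=
  (forall d, head (sigma d) = head d) /\
  (forall d d', head d = head d' -> fconnect sigma d d').

Definition face_perm (sigma : {perm dart_of}) (d : dart) : dart := sigma (rev d).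
Definition face (sigma : {perm dart_of}) (d : dart) : {set dart} :=
  [set d' | fconnect (face_perm sigma) d d'].
Definition faces (sigma : {perm dart_of}) : {set {set dart}} :=
  [set face sigma d | d : dart].

(* the rotation system describes a cellular embedding in S^2
   (connected, Euler characteristic 2) *)
Definition spherical (sigma : {perm dart_of}) : Prop :=
  [/\ rotation_system sigma, connected_graph &
      (#|V| + #|faces sigma| = #|E| + 2)%N].

(* closure of each face is a disk: the facial walk is a simple closed curve *)
Definition faces_are_disks (sigma : {perm dart_of}) : Prop :=
  forall d, {in face sigma d &, injective head}.

Definition cellular_S2 (sigma : {perm dart_of}) : Prop :=
  spherical sigma /\ faces_are_disks sigma.

(* checkerboard colouring of the faces (true = black, false = white) *)
Definition checkerboard (sigma : {perm dart_of}) (col : dart -> bool) : Prop :=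
  forall d, col (face_perm sigma d) = col d /\ col (rev d) = ~~ col d.

Definition boundary (sigma : {perm dart_of}) (d : dart) : {set E} :=
  [set d'.1 | d' in face sigma d].

Definition black_cycles (sigma : {perm dart_of}) (col : dart -> bool) : {set {set E}} :=
  [set C in Cycles | [exists d : dart, col d && (boundary sigma d == C)]].
Definition white_cycles (sigma : {perm dart_of}) (col : dart -> bool) : {set {set E}} :=
  [set C in Cycles | [exists d : dart, ~~ col d && (boundary sigma d == C)]].

Definition omega (sigma : {perm dart_of}) (col : dart -> bool) (C : {set E}) : int :=
  if C \in black_cycles sigma col then 1
  else if C \in white_cycles sigma col then -1 else 0.

End GraphDefs.

(* Main.v *)
Require Import Defs.
From mathcomp Require Import all_boot all_order all_algebra all_fingroup.
Set Implicit Arguments. Unset Strict Implicit. Unset Printing Implicit Defensive.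

Section Proof.
Variables (V E : finType) (head : E * bool -> V)
    (sigma : {perm dart_of E}) (col : dart E -> bool).
Hypothesis Hdeg : min_deg2 head.
Hypothesis Hcell : cellular_S2 head sigma.
Hypothesis Hcol : checkerboard sigma col.

Local Notation f := (face_perm sigma).
Local Notation face := (face sigma).
Local Notation boundary := (boundary sigma).

Lemma revK (d : dart E) : Defs.rev (Defs.rev d) = d.
Proof. by case: d => a b; rewrite /Defs.rev /= negbK. Qed.

Lemma rev_inj : injective (@Defs.rev E).
Proof. exact: can_inj revK. Qed.

Lemma f_inj : injective f.
Proof. by move=> x y; rewrite /face_perm => /perm_inj /rev_inj. Qed.

Lemma rot1 d : head (sigma d) = head d.
Proof. by case: Hcell => -[[H1 _] _ _] _; apply: H1. Qed.

Lemma rot2 d d' : head d = head d' -> fconnect sigma d d'.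
Proof. by case: Hcell => -[[_ H] _ _] _; apply: H. Qed.

Lemma disk d : {in face d &, injective head}.
Proof. by case: Hcell => _; apply. Qed.

Lemma head_f x : head (f x) = head (Defs.rev x).
Proof. by rewrite /face_perm rot1. Qed.

Lemma face_refl x : x \in face x.
Proof. by rewrite inE connect0. Qed.

Lemma face_f x y : y \in face x -> f y \in face x.
Proof. by rewrite !inE => H; apply: connect_trans H (fconnect1 _ _). Qed.

Lemma face_eq x y : y \in face x -> face y = face x.
Proof.
rewrite inE => H; apply/setP => z; rewrite !inE.
apply/idP/idP => Hz; first exact: connect_trans H Hz.
by rewrite fconnect_sym // in H; [apply: connect_trans H Hz | exact: f_inj].
Qed.

Lemma col_face x y : y \in face x -> col y = col x.
Proof.
rewrite inE => /iter_findex <-; elim: (findex _ _ _) => //= n IH.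
by case: (Hcol (iter n f x)) => -> _.
Qed.

Lemma sigma_nfix d : sigma d != d.
Proof.
apply/eqP => H.
have Hs : [set d' : dart E | (d'.1 \in setT) && (head d' == head d)] \subset [set d].
  apply/subsetP => y; rewrite !inE => /andP [_ /eqP Hy].
  have := rot2 (esym Hy) => /iter_findex <-.
  elim: (findex _ _ _) => //= n /eqP ->; by rewrite H.
have := Hdeg (head d); rewrite /degC.
by move: (subset_leq_card Hs); rewrite cards1; case: #|_| => [|[|]].
Qed.

Lemma rev_notin x : Defs.rev x \notin face x.
Proof.
apply/negP => H.
have Hf := face_f (face_refl x).
have := disk H Hf (esym (head_f x)) => E1.
by move: (sigma_nfix (Defs.rev x)); rewrite {2}E1 /face_perm eqxx.
Qed.

Lemma bnd_face x g : g \in boundary x -> exists b, (g, b) \in face x.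
Proof. by case/imsetP => -[a b] Hy ->; exists b. Qed.

Lemma mem_bnd x y : y \in face x -> y.1 \in boundary x.
Proof. by move=> H; apply/imsetP; exists y. Qed.

Lemma dart_cases (g : E) b (y : dart E) : y.1 = g -> y = (g, b) \/ y = Defs.rev (g, b).
Proof. by case: y => a c /= ->; case: b; case: c; auto. Qed.


Lemma inc_face d v : inc head (boundary d) v -> exists2 y, y \in face d & head y = v.
Proof.
case/existsP => x /andP [/bnd_face [b Hb] /eqP Hv].
case: (dart_cases b (erefl x.1)) => Ex.
  by exists (x.1, b); rewrite // -Ex.
exists (f (x.1, b)); first exact: face_f.
by rewrite head_f -Ex.
Qed.

Lemma face_trans x y z : y \in face x -> z \in face y -> z \in face x.
Proof. by move=> H; rewrite (face_eq H). Qed.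

Lemma bnd_cycle d : is_cycle head (boundary d).
Proof.
apply/and3P; split.
- by apply/set0Pn; exists d.1; apply: mem_bnd (face_refl d).
- apply/forallP => v; apply/implyP => /inc_face [y Hy Hv].
  set p := finv f y. rewrite /degC.
  have Hp : f p = y by rewrite /p f_finv //; exact: f_inj.
  have Hpf : p \in face d.
    by apply: face_trans Hy _; rewrite inE fconnect_finv.
  have -> : [set x : dart E | (x.1 \in boundary d) && (head x == v)] = [set y; Defs.rev p].
    apply/setP => x; rewrite !inE; apply/idP/idP.
    + case/andP => /bnd_face [b Hb] /eqP Hxv.
      case: (dart_cases b (erefl x.1)) => Ex.
        by rewrite Ex (disk Hb Hy) ?eqxx // -Ex Hxv.
      have Hfb := face_f Hb.
      have E2 : f (x.1, b) = y by apply: (disk Hfb Hy); rewrite head_f -Ex Hxv.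
      by rewrite Ex; move: E2; rewrite -Hp => /f_inj ->; rewrite eqxx orbT.
    + case/orP => /eqP ->; apply/andP; split.
      * exact: mem_bnd.
      * by rewrite Hv.
      * exact: (mem_bnd Hpf).
      * by rewrite -head_f Hp Hv.
  rewrite cards2; case: (eqVneq y (Defs.rev p)) => [Hyp|//].
  by move: (sigma_nfix y); rewrite -{2}Hp /face_perm -Hyp eqxx.
- have step : forall x, x \in face d ->
      adjC head (boundary d) (head x) (head (f x)) /\ adjC head (boundary d) (head (f x)) (head x).
    move=> x Hx; split; apply/existsP.
    + exists (Defs.rev x); rewrite revK eqxx -head_f eqxx andbT andbT.
      exact: (mem_bnd Hx).
    + by exists x; rewrite head_f !eqxx (mem_bnd Hx).
  have conn : forall n, connect (adjC head (boundary d)) (head d) (head (iter n f d)) /\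
                        connect (adjC head (boundary d)) (head (iter n f d)) (head d).
    elim => [|n [IH1 IH2]] /=; first by rewrite connect0.
    have Hn : iter n f d \in face d by rewrite inE fconnect_iter.
    case: (step _ Hn) => A1 A2; split.
      by apply: connect_trans IH1 (connect1 A1).
    by apply: connect_trans (connect1 A2) IH2.
  have key : forall y, y \in face d -> connect (adjC head (boundary d)) (head d) (head y) /\
                        connect (adjC head (boundary d)) (head y) (head d).
    by move=> y; rewrite inE => /iter_findex <-; apply: conn.
  apply/forallP => u; apply/forallP => w; apply/implyP => /andP [/inc_face [y Hy <-] /inc_face [z Hz <-]].
  by apply: connect_trans (proj2 (key _ Hy)) (proj1 (key _ Hz)).
Qed.


Lemma bnd_eq_face a c x : boundary a = boundary c -> x \in face a ->
  Defs.rev x \in face c \/ face a = face c.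
Proof.
move=> Eac Hx; have := mem_bnd Hx; rewrite Eac => /bnd_face [b Hb].
case: (dart_cases b (erefl x.1)) => Ex.
  by right; rewrite -(face_eq Hx) -(face_eq Hb) -Ex.
by left; rewrite Ex revK.
Qed.

Lemma bnd_neq d : ~ is_cycle head setT -> boundary d != boundary (Defs.rev d).
Proof.
move=> Hnc; apply/eqP => EB.
have Hfn : face d <> face (Defs.rev d).
  by move=> Ef; move: (rev_notin d); rewrite Ef face_refl.
pose D0 := face d :|: face (Defs.rev d).
have crev : forall x, x \in D0 -> Defs.rev x \in D0.
  move=> x; rewrite !in_setU => /orP [] Hx.
  - case: (bnd_eq_face EB Hx) => [->|//]; first by rewrite orbT.
  - case: (bnd_eq_face (esym EB) Hx) => [->//|E1]; by have := Hfn (esym E1).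
have csig : forall x, x \in D0 -> sigma x \in D0.
  move=> x /crev; rewrite !in_setU => /orP [] /face_f; rewrite /face_perm revK => ->//.
  by rewrite orbT.
have cfc : forall x y, fconnect sigma x y -> x \in D0 -> y \in D0.
  move=> x y /iter_findex <-; elim: (findex _ _ _) => //= n IH Hx.
  exact: csig (IH Hx).
have Hd0 : d \in D0 by rewrite in_setU face_refl.
have vert : forall w, exists2 x, x \in D0 & head x = w.
  move=> w; case: Hcell => -[_ Hconn _] _.
  case/connectP: (Hconn (head d) w) => p Hp ->.
  have Hstart : exists2 x, x \in D0 & head x = head d by exists d.
  elim: p (head d) Hstart Hp => [|u p IH] v [x Hx Hxv] //=; first by exists x.
  case/andP => /existsP [z /and3P [_ /eqP Hz1 /eqP Hz2]] Hp.
  apply: IH Hp; exists z => //.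
  have Hrz : Defs.rev z \in D0 by apply: (cfc x); [apply: rot2; rewrite Hxv Hz1|].
  by move: (crev _ Hrz); rewrite revK.
have all0 : forall y, y \in D0.
  move=> y; case: (vert (head y)) => x Hx Hxy.
  exact: (cfc x y (rot2 Hxy) Hx).
apply: Hnc; suff <- : boundary d = setT by apply: bnd_cycle.
apply/setP => g; rewrite inE; move: (all0 (g, true)); rewrite in_setU => /orP [] H.
  exact: (mem_bnd H).
by rewrite EB; exact: (mem_bnd H).
Qed.


Lemma bnd_face_eq x y : y \in face x -> boundary y = boundary x.
Proof. by move=> H; rewrite /Defs.boundary (face_eq H). Qed.

Lemma bnd_e x e : e \in boundary x -> exists b, boundary x = boundary (e, b) /\ col x = col (e, b).
Proof.
case/bnd_face => b Hb; exists b; split; first by rewrite (bnd_face_eq Hb).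
by rewrite (col_face Hb).
Qed.

Hypothesis Hnc : ~ is_cycle head setT.

Lemma col_iff e b c :
  [exists x, (col x == c) && (boundary x == boundary (e, b))] = (col (e, b) == c).
Proof.
apply/existsP/idP; last by move=> H; exists (e, b); rewrite H eqxx.
case=> x /andP [/eqP Hx /eqP Ex].
have : e \in boundary x by rewrite Ex (mem_bnd (face_refl (e, b))).
case/bnd_e => b' [E1 E2].
case: (eqVneq b b') => [Ebb|Hbb]; first by rewrite Ebb -E2 Hx eqxx.
have Hr : (e, b') = Defs.rev (e, b) by rewrite /Defs.rev /=; case: b b' Hbb {E1 E2 Ex} => -[].
by move: (bnd_neq (e, b) Hnc); rewrite -Hr -E1 Ex eqxx.
Qed.

Lemma omega_bnd e b :
  omega head sigma col (boundary (e, b)) = if col (e, b) then 1%R else (-1)%R.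
Proof.
rewrite /omega /black_cycles /white_cycles !inE bnd_cycle /=.
rewrite (eq_existsb (P2 := fun x => (col x == true) && (boundary x == boundary (e, b)))); last first.
  by move=> x; rewrite eqb_id.
rewrite col_iff eqb_id.
rewrite (eq_existsb (P2 := fun x => (col x == false) && (boundary x == boundary (e, b)))); last first.
  by move=> x; rewrite eqbF_neg.
by rewrite col_iff; case: (col _).
Qed.

Lemma omega_other (e : E) (C : {set E}) : e \in C -> C != boundary (e, true) -> C != boundary (e, false) ->
  omega head sigma col C = 0%R.
Proof.
move=> HeC H1 H2; rewrite /omega /black_cycles /white_cycles !inE.
have nb : forall x, boundary x == C = false.
  move=> x; apply/negbTE/eqP => Ex; move: HeC; rewrite -Ex => /bnd_e [[] [E1 _]].
    by move: H1; rewrite -Ex E1 eqxx.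
  by move: H2; rewrite -Ex E1 eqxx.
have -> : [exists d, col d && (boundary d == C)] = false.
  by apply/existsP => -[x]; rewrite nb andbF.
have -> : [exists d, ~~ col d && (boundary d == C)] = false.
  by apply/existsP => -[x]; rewrite nb andbF.
by rewrite !andbF.
Qed.

End Proof.

Theorem proposition4p1 (V E : finType) (head : E * bool -> V)
    (sigma : {perm dart_of E}) (col : dart E -> bool) :
  min_deg2 head ->
  cellular_S2 head sigma ->
  ~ is_cycle head [set: E] ->
  checkerboard sigma col ->
  forall e : E,
    (\sum_(C in Cycles head | e \in C) omega head sigma col C)%R = 0%R.
Proof.
move=> Hdeg Hcell Hnc Hcol e.
have Hneq := bnd_neq Hdeg Hcell (e, true) Hnc.
have Hc0 : (Defs.boundary sigma (e, true) \in Cycles head) && (e \in Defs.boundary sigma (e, true)).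
  by rewrite inE bnd_cycle // (mem_bnd (face_refl _ (e, true))).
have Hc1 : (Defs.boundary sigma (e, false) \in Cycles head) && (e \in Defs.boundary sigma (e, false)).
  by rewrite inE bnd_cycle // (mem_bnd (face_refl _ (e, false))).
rewrite (bigD1 (Defs.boundary sigma (e, true))) //=.
rewrite (bigD1 (Defs.boundary sigma (e, false))) /=; last by rewrite Hc1 eq_sym.
rewrite big1; last first.
  move=> C /andP [/andP [/andP [_ HeC] H1] H2].
  exact: (omega_other head Hcol HeC H1 H2).
rewrite !(omega_bnd Hdeg Hcell Hcol Hnc).
have := proj2 (Hcol (e, true)); rewrite /Defs.rev /= => ->.
by case: (col (e, true)); rewrite /= ?addr0 ?subrr // addrC subrr.
Qed.
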